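(* For $n\ge 2$, let $\overline{\mathcal M}_{\neq}(n)$ be the number of MAU pairs $(u,v)$ of binary words with $|u|=|v|=n$ and $|u|_c\ne|v|_c$ for some $c\in\{a,b\}$. Then $$\overline{\mathcal M}_{\neq}(n)=2\sum_{r_2=0}^{n-2}\ \sum_{r_1=r_2+2}^{n}{}_{A}N_{O}^{B_{r_2}},$$ where, for each $(r_1,r_2)$, $A=(r_2-r_1,\,r_1-r_2)$, $O=(0,0)$ and $B_{r_2}=(r_2,\,n-r_2)$.
   Context: Let $\Sigma=\{a,b\}$. For a word $w$ and a letter $c$, $|w|_c$ denotes the number of occurrences of $c$ in $w$. Two words $x,y$ are abelian equivalent, written $x\sim_{\mathrm{abl}}y$, if $|x|_c=|y|_c$ for all $c\in\Sigma$. For words $u,v$: a pair $(x,y)$ is an internal abelian-border of $(u,v)$ if $x$ is a nonempty proper suffix of $u$, $y$ is a proper prefix of $v$, and $x\sim_{\mathrm{abl}}y$; it is an external abelian-border of $(u,v)$ if $x$ is a nonempty proper prefix of $u$, $y$ is a proper suffix of $v$, and $x\sim_{\mathrm{abl}}y$. The pair $(u,v)$ is mutually abelian-bordered (MAB) if it has both an internal and an external abelian-border, and mutually abelian-unbordered (MAU) if it has neither. A lattice path is a finite sequence of points of $\mathbb Z^2$ in which each consecutive difference is $(1,0)$ (an east step) or $(0,1)$ (a north step). The word $w(p)\in\Sigma^*$ of a lattice path $p$ records its steps in order, writing $a$ for an east step and $b$ for a north step; conversely, for a point $A\in\mathbb Z^2$ and a word $w$, $p_A(w)$ is the lattice path starting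 at $A$ whose word is $w$. For lattice paths $p,q$, $p\cap q$ denotes the set of lattice points lying on both. For distinct lattice points $A,B,C$, ${}_{A}\mathcal N_{B}^{C}$ is the set of triples $(p,q,p')$ where $p$ is a lattice path from $A$ to $C$, $q$ is a lattice path from $B$ to $C$, $p'=p_B(w(p))$, $p\cap q=\{C\}$ and $q\cap p'=\{B\}$; and ${}_{A}N_{B}^{C}=|{}_{A}\mathcal N_{B}^{C}|$. *)

(* Defs.v *)
From mathcomp Require Import all_boot all_order all_algebra.
Set Implicit Arguments. Unset Strict Implicit. Unset Printing Implicit Defensive.
Import GRing.Theory Num.Theory.

(* Alphabet {a,b}: letter a is [true], letter b is [false]. *)
Definition letter := bool.
Definition la : letter := true.
Definition lb : letter := false.
Definition word := seq letter.

Definition abel_eq (x y : word) : bool :=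
  all (fun c => count_mem c x == count_mem c y) [:: la; lb].

Definition has_internal_border (u v : word) : bool :=
  [exists i : 'I_(size u), [exists j : 'I_(size v),
     (0 < i)%N && abel_eq (drop (size u - i) u) (take j v)]].

Definition has_external_border (u v : word) : bool :=
  [exists i : 'I_(size u), [exists j : 'I_(size v),
     (0 < i)%N && abel_eq (take i u) (drop (size v - j) v)]].

Definition MAU (u v : word) : bool :=
  ~~ has_internal_border u v && ~~ has_external_border u v.

Definition Mbar_neq (n : nat) : nat :=
  #|[set uv : n.-tuple bool * n.-tuple bool |
      MAU uv.1 uv.2 && ~~ abel_eq uv.1 uv.2]|.

Definition point := (int * int)%type.
Definition step (P : point) (c : letter) : point :=
  if c then (P.1 + 1, P.2)%R else (P.1, P.2 + 1)%R.

Definition path_of (A : point) (w : word) : seq point := A :: scanl step A w.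

Definition meets_exactly (p q : seq point) (X : point) : bool :=
  (X \in p) && (X \in q) && all (fun Y => (Y \in q) ==> (Y == X)) p.

Definition plen (P Q : point) : nat := `|((Q.1 - P.1) + (Q.2 - P.2))%R|%N.

(* _A N_B^C : a lattice path p from A to C is p_A(w) for a word w (the path is
   determined by its start point and word), ending at C; similarly q = p_B(w2).
   p' = p_B(w(p)) is determined by p, so triples correspond to pairs (w, w2). *)
Definition Ncount (A B C : point) : nat :=
  #|[set pq : (plen A C).-tuple bool * (plen B C).-tuple bool |
      let p := path_of A pq.1 in
      let q := path_of B pq.2 in
      let p' := path_of B pq.1 in
      [&& last A p == C, last B q == C,
          meets_exactly p q C & meets_exactly q p' B]]|.

(* Main.v *)
Require Import Defs.
From mathcomp Require Import all_boot all_order all_algebra zify.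
Set Implicit Arguments. Unset Strict Implicit. Unset Printing Implicit Defensive.


Definition cnt (s : seq bool) := count_mem true s.

Lemma cnt_size (s : seq bool) : count_mem true s + count_mem false s = size s.
Proof. elim: s => //= [[]] s IH /=; lia. Qed.

Lemma abel_eqE x y : abel_eq x y = (size x == size y) && (cnt x == cnt y).
Proof.
rewrite /abel_eq /cnt /la /lb /= andbT -(cnt_size x) -(cnt_size y).
apply/idP/idP => [/andP[/eqP -> /eqP ->]|/andP[/eqP h /eqP h2]].
  by rewrite !eqxx.
rewrite /la /lb; apply/andP; split; apply/eqP; first exact: h2.
by move: h; rewrite h2 => /addnI.
Qed.


Lemma cnt_take_drop i s : cnt (take i s) + cnt (drop i s) = cnt s.
Proof. by rewrite /cnt -count_cat cat_take_drop. Qed.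

Lemma cnt_rev s : cnt (rev s) = cnt s.
Proof. by rewrite /cnt count_rev. Qed.

Definition Qn n (w w2 : seq bool) : bool :=
  [forall i : 'I_n, cnt (drop i w) != cnt (drop i w2)] &&
  [forall i : 'I_n, cnt (take i.+1 w) != cnt (take i.+1 w2)].

Lemma MAU_neqE n (u v : seq bool) : 0 < n -> size u = n -> size v = n ->
  (MAU u v && ~~ abel_eq u v) = Qn n u (rev v).
Proof.
move=> n0 su sv; rewrite /MAU /has_internal_border /has_external_border su sv.
apply/idP/idP.
- case/andP=> /andP[hi he] ha; apply/andP; split; apply/forallP => i.
  + case: (posnP i) => [i0|ip].
      rewrite i0 !drop0 cnt_rev; move: ha; by rewrite abel_eqE su sv eqxx.
    apply/negP => /eqP h; move/negP: hi; apply; apply/existsP.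
    have l1 : n - i < n by lia.
    exists (Ordinal l1); apply/existsP; exists (Ordinal l1) => /=.
    have li := ltn_ord i.
    rewrite abel_eqE size_drop size_take su sv l1.
    have e : n - (n - i) = i by lia.
    rewrite e; apply/and3P; split; [lia | apply/eqP; lia | ].
    by rewrite h drop_rev sv cnt_rev.
  + case: (ltnP i.+1 n) => [l1|l1].
      apply/negP => /eqP h; move/negP: he; apply; apply/existsP.
      exists (Ordinal l1); apply/existsP; exists (Ordinal l1) => /=.
      rewrite abel_eqE size_drop size_take su sv l1.
      have e : n - (n - i.+1) = i.+1 by lia.
      rewrite e eqxx /=.
      by rewrite h take_rev sv cnt_rev.
    have e : i.+1 = n by have := ltn_ord i; lia.
    rewrite e !take_oversize ?size_rev ?su ?sv // cnt_rev.
    move: ha; by rewrite abel_eqE su sv eqxx.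
- case/andP=> /forallP h1 /forallP h2.
  have l0 : 0 < n by [].
  apply/andP; split; first (apply/andP; split).
  + apply/negP => /existsP[i /existsP[j /andP[ip]]].
    rewrite abel_eqE size_drop size_take su sv (ltn_ord j) => /andP[/eqP e /eqP c].
    have l1 : n - i < n by lia.
    have := h1 (Ordinal l1); rewrite /= drop_rev sv cnt_rev c.
    have -> : n - (n - i) = j by have := ltn_ord i; lia.
    by rewrite eqxx.
  + apply/negP => /existsP[i /existsP[j /andP[ip]]].
    rewrite abel_eqE size_drop size_take su sv (ltn_ord i) => /andP[/eqP e /eqP c].
    have l1 : i.-1 < n by have := ltn_ord i; lia.
    have := h2 (Ordinal l1); rewrite /= take_rev sv cnt_rev.
    have -> : i.-1.+1 = i by lia.
    have ej : (i : nat) = j by have := ltn_ord j; lia.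
    by rewrite c ej eqxx.
  + rewrite abel_eqE su sv eqxx /=.
    have := h1 (Ordinal l0); rewrite /= !drop0 cnt_rev.
    by apply: contraNN => ->.
Qed.


Lemma Qn_sym n u v : Qn n u v = Qn n v u.
Proof.
by rewrite /Qn; congr (_ && _); apply: eq_forallb => i; rewrite eq_sym.
Qed.

Lemma Qn_neq n u v : 0 < n -> Qn n u v -> cnt u != cnt v.
Proof.
move=> n0 /andP[/forallP h _]; by have := h (Ordinal n0); rewrite /= !drop0.
Qed.

Lemma cnt_drop_cons (s : seq bool) i : i < size s ->
  cnt (drop i s) = (nth false s i : nat) + cnt (drop i.+1 s).
Proof. by move=> h; rewrite (drop_nth false h) /cnt /=; case: (nth false s i). Qed.

Lemma cnt_le s : cnt s <= size s.
Proof. by rewrite /cnt count_size. Qed.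


Lemma Qn_gap n u v : 1 < n -> size u = n -> size v = n -> Qn n u v ->
  cnt u = (cnt v).+1 -> False.
Proof.
move=> n1 su sv /andP[/forallP h1 /forallP h2] e.
have st : forall i, i < n -> cnt (drop i v) < cnt (drop i u).
  elim=> [_|i IH lt]; first by rewrite !drop0 e.
  have := IH (ltnW lt).
  rewrite (cnt_drop_cons (s := u)) ?su ?(ltnW lt) //.
  rewrite (cnt_drop_cons (s := v)) ?sv ?(ltnW lt) //.
  have := h1 (Ordinal lt); rewrite /=.
  have := leq_b1 (nth false u i); have := leq_b1 (nth false v i).
  move=> b1 b2 /eqP ne; lia.
have l1 : n.-1 < n by lia.
have := st _ l1.
have du := cnt_le (drop n.-1 u); have dv := cnt_le (drop n.-1 v).
rewrite !size_drop su sv in du dv.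
have tu := cnt_take_drop n.-1 u; have tv := cnt_take_drop n.-1 v.
have l2 : n.-2 < n by lia.
have := h2 (Ordinal l2); rewrite /=.
have -> : n.-2.+1 = n.-1 by lia.
move=> /eqP ne lt; lia.
Qed.

Section Count.
Variable n : nat.
Local Notation T := (n.-tuple bool * n.-tuple bool)%type.

Lemma step1 : 0 < n -> Mbar_neq n = #|[set uv : T | Qn n uv.1 uv.2]|.
Proof.
move=> n0; rewrite /Mbar_neq.
pose f (uv : T) : T := (uv.1, [tuple of rev uv.2]).
have finj : injective f.
  apply: (can_inj (g := f)) => [[a b]]; congr (_, _); apply: val_inj => /=.
  by rewrite revK.
rewrite -[RHS](card_preimset _ finj); apply: eq_card => uv; rewrite !inE /=.
by rewrite (@MAU_neqE n) ?size_tuple.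
Qed.

Lemma step2 : 0 < n -> #|[set uv : T | Qn n uv.1 uv.2]| =
  2 * #|[set uv : T | Qn n uv.1 uv.2 && (cnt uv.2 < cnt uv.1)]|.
Proof.
move=> n0.
rewrite -(cardsID [set uv : T | cnt uv.2 < cnt uv.1]).
pose g (uv : T) : T := (uv.2, uv.1).
have ginj : injective g by apply: (can_inj (g := g)) => [[a b]].
rewrite mul2n -addnn; congr (_ + _).
  by apply: eq_card => uv; rewrite !inE.
rewrite -(card_preimset _ ginj); apply: eq_card => uv; rewrite !inE /=.
rewrite (Qn_sym n uv.2 uv.1); case q: (Qn n uv.1 uv.2); rewrite ?andbF ?andbT //=.
have := Qn_neq n0 q; rewrite -ltnNge => ne.
by rewrite ltnS leq_eqVlt eq_sym (negbTE ne).
Qed.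

Lemma sum_ind m p k (b : nat -> bool) :
  \sum_(m <= i < p) ((i == k) && b i : nat) = ((m <= k < p) && b k).
Proof.
elim: p => [|p IH]; first by rewrite big_geq // ltn0 andbF.
case: (leqP m p) => mp.
  rewrite big_nat_recr //= IH.
  case: (eqVneq p k) => [<-|ne].
    by rewrite ltnn mp ltnSn andbF /=; case: (b p).
  rewrite addn0; congr (_ && _); congr (_ && _).
  have ne2 : (k == p) = false by apply/negbTE; rewrite eq_sym.
  by rewrite [RHS]ltnS [RHS]leq_eqVlt ne2.
rewrite big_geq //.
by case: (leqP m k) => //= mk; rewrite ltnS; have -> : k <= p = false by apply/negbTE; lia.
Qed.

Lemma card_sum (P : pred T) : #|[set x | P x]| = \sum_(x : T) (P x : nat).
Proof.
rewrite -sum1dep_card big_mkcond /=; apply: eq_bigr => x _; by case: (P x).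
Qed.

Lemma step3 : 1 < n -> #|[set uv : T | Qn n uv.1 uv.2 && (cnt uv.2 < cnt uv.1)]| =
  \sum_(0 <= r2 < n.-1) \sum_(r2.+2 <= r1 < n.+1)
     #|[set uv : T | [&& cnt uv.1 == r1, cnt uv.2 == r2 & Qn n uv.1 uv.2]]|.
Proof.
move=> n1.
under eq_bigr => r2 _ do under eq_bigr => r1 _ do rewrite card_sum.
under eq_bigr => r2 _ do rewrite exchange_big.
rewrite exchange_big card_sum; apply: eq_bigr => [[u v]] _ /=.
transitivity (\sum_(0 <= r2 < n.-1) ((r2 == cnt v) &&
   ((r2.+2 <= cnt u < n.+1) && Qn n u v) : nat)); last first.
  apply: eq_bigr => r2 _.
  rewrite (eq_bigr (fun r1 => ((r1 == cnt u) && ((r2 == cnt v) && Qn n u v) : nat))).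
    rewrite (sum_ind _ _ _ (fun _ => (r2 == cnt v) && Qn n u v)).
    by case: (r2 == cnt v); case: (Qn n u v); rewrite ?andbF ?andbT.
  move=> r1 _; rewrite (eq_sym (cnt u)) (eq_sym (cnt v)).
  by case: (r1 == cnt u).
rewrite (sum_ind _ _ _ (fun r2 => (r2.+2 <= cnt u < n.+1) && Qn n u v)).
case q: (Qn n u v); rewrite ?andbF //= ?andbT.
have cu := cnt_le u; have cv := cnt_le v; rewrite size_tuple in cu cv.
case: (ltngtP (cnt v) (cnt u)) => h.
- case: (eqVneq (cnt u) (cnt v).+1) => [e|ne].
    by exfalso; apply: (Qn_gap n1 _ _ q e); rewrite size_tuple.
  have -> : (cnt v < n.-1) = true by apply/idP; lia.
  have -> : (cnt v).+2 <= cnt u = true by apply/idP; lia.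
  by rewrite ltnS cu.
- have -> : (cnt v).+2 <= cnt u = false by apply/negbTE; lia.
  by rewrite andbF.
- by have := Qn_neq (ltnW n1) q; rewrite h eqxx.
Qed.

End Count.

Import GRing.Theory.

Definition pt (A : point) (w : seq bool) (i : nat) : point :=
  (A.1 + (cnt (take i w))%:Z, A.2 + (count_mem false (take i w))%:Z)%R.

Lemma pt0 A w : pt A w 0 = A.
Proof. case: A => x y; rewrite /pt take0 /=; congr (_, _); lia. Qed.

Lemma pt_cons A c w i : pt A (c :: w) i.+1 = pt (step A c) w i.
Proof.
case: A => x y; case: c; rewrite /pt /step /=; congr (_, _);
  rewrite ?add0n ?PoszD ?addrA //; by rewrite [(1 + _)%R]addrC addrA.
Qed.

Lemma path_ofE A w : path_of A w = [seq pt A w i | i <- iota 0 (size w).+1].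
Proof.
elim: w A => [|c w IH] A; first by rewrite /= pt0.
have -> : path_of A (c :: w) = A :: path_of (step A c) w by [].
have -> : iota 0 (size (c :: w)).+1 = 0 :: map (addn 1) (iota 0 (size w).+1).
  by rewrite -iotaDl.
rewrite IH map_cons -map_comp pt0; congr (_ :: _).
apply: eq_map => i /=; by rewrite add1n pt_cons.
Qed.

Lemma last_path X A w : last X (path_of A w) = pt A w (size w).
Proof.
elim: w X A => [|c w IH] X A; first by rewrite /= pt0.
have -> : path_of A (c :: w) = A :: path_of (step A c) w by [].
by rewrite last_cons IH /= pt_cons.
Qed.

Lemma pt_sum A w i : i <= size w ->
  ((pt A w i).1 + (pt A w i).2 = A.1 + A.2 + i%:Z)%R.
Proof.
move=> h; have := cnt_size (take i w); rewrite size_takel // /pt /cnt /= => e.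
lia.
Qed.

Lemma pt_eq A B w w2 i : i <= size w -> i <= size w2 -> (A.1 + A.2 = B.1 + B.2)%R ->
  (pt A w i == pt B w2 i) = (A.1 + (cnt (take i w))%:Z == B.1 + (cnt (take i w2))%:Z)%R.
Proof.
case: A => a1 a2; case: B => b1 b2 /=.
move=> h1 h2 e; have s1 := pt_sum (a1, a2) h1; have s2 := pt_sum (b1, b2) h2.
move: s1 s2; rewrite /pt /cnt /= => s1 s2.
apply/idP/idP => [/eqP [-> _] //|/eqP e1].
apply/eqP; congr (_, _) => //; lia.
Qed.

Lemma all_path A B X w w2 n : size w = n -> size w2 = n -> (A.1 + A.2 = B.1 + B.2)%R ->
  all (fun Y => (Y \in path_of B w2) ==> (Y == X)) (path_of A w) =
  [forall i : 'I_n.+1, (pt A w i == pt B w2 i) ==> (pt A w i == X)].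
Proof.
case: A => a1 a2; case: B => b1 b2.
move=> s1 s2 e; rewrite !path_ofE s1 s2 all_map; simpl in e.
set s := iota 0 n.+1.
have ms : forall k, (k \in s) = (k < n.+1) by move=> k; rewrite mem_iota.
clearbody s.
apply/allP/forallP => [h i|h i].
  have := h i; rewrite ms (ltn_ord i) => /(_ isT) /implyP h1.
  by apply/implyP => /eqP ei; apply: h1; rewrite ei map_f // ms ltn_ord.
rewrite ms => hi /=; apply/implyP => /mapP[j].
rewrite ms => hj eij.
have ss := pt_sum (a1, a2) (i := i) (w := w); have ss2 := pt_sum (b1, b2) (i := j) (w := w2).
rewrite s1 in ss; rewrite s2 in ss2.
have ij : i = j.
  have := ss hi; have := ss2 hj; rewrite -eij => ea eb. simpl in ea, eb; lia.
subst j; have := h (Ordinal hi) => /= /implyP; apply; by rewrite eij.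
Qed.

Lemma forallS_last n (P : nat -> bool) :
  [forall i : 'I_n.+1, P i] = [forall i : 'I_n, P i] && P n.
Proof.
apply/forallP/andP => [h|[/forallP h hn] i].
  split; last exact: (h ord_max).
  by apply/forallP => i; exact: (h (widen_ord (leqnSn n) i)).
case: (ltnP i n) => [lt|ge]; first exact: (h (Ordinal lt)).
by have -> : (i : nat) = n by have := ltn_ord i; lia.
Qed.

Lemma forallS_first n (P : nat -> bool) :
  [forall i : 'I_n.+1, P i] = P 0 && [forall i : 'I_n, P i.+1].
Proof.
apply/forallP/andP => [h|[h0 /forallP h] i].
  split; first exact: (h ord0).
  by apply/forallP => i; exact: (h (lift ord0 i)).
case: (posnP i) => [->//|ip].
have lt : i.-1 < n by have := ltn_ord i; lia.
by have := h (Ordinal lt); rewrite /= prednK.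
Qed.

Lemma mem_last_path A w : pt A w (size w) \in path_of A w.
Proof.
rewrite -(last_path A A w).
change (last A (A :: scanl step A w) \in A :: scanl step A w).
rewrite last_cons; exact: mem_last.
Qed.

Lemma intE (x y : int) : x = y -> x = y. Proof. by []. Qed.
Lemma natE (x y : nat) : x = y -> x = y. Proof. by []. Qed.

Lemma mem_head_path A w : A \in path_of A w.
Proof. exact: mem_head. Qed.

Lemma key n r1 r2 (w w2 : seq bool) : size w = n -> size w2 = n ->
  [&& last (Posz r2 - Posz r1, Posz r1 - Posz r2)%R
        (path_of (Posz r2 - Posz r1, Posz r1 - Posz r2)%R w) == (Posz r2, Posz n - Posz r2)%R,
      last (0, 0)%R (path_of (0, 0)%R w2) == (Posz r2, Posz n - Posz r2)%R,
      meets_exactly (path_of (Posz r2 - Posz r1, Posz r1 - Posz r2)%R w)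
        (path_of (0, 0)%R w2) (Posz r2, Posz n - Posz r2)%R &
      meets_exactly (path_of (0, 0)%R w2) (path_of (0, 0)%R w) (0, 0)%R]
  = [&& cnt w == r1, cnt w2 == r2 & Qn n w w2].
Proof.
move=> s1 s2.
rewrite !last_path s1 s2.
have cw := cnt_size w; have cw2 := cnt_size w2.
rewrite s1 in cw; rewrite s2 in cw2.
have eA : (pt (Posz r2 - Posz r1, Posz r1 - Posz r2)%R w n == (Posz r2, Posz n - Posz r2)%R)
   = (cnt w == r1).
  rewrite /pt take_oversize ?s1 //.
  have cf : cnt w + count_mem false w = n := cw.
  apply/eqP/eqP => [[h _]|h].
    have h' : (Posz r2 - Posz r1 + Posz (cnt w) = Posz r2)%R := h.
    change (cnt w = r1); lia.
  change (cnt w = r1) in h.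
  have e1 : (Posz r2 - Posz r1 + Posz (cnt w) = Posz r2)%R by lia.
  have e2 : (Posz r1 - Posz r2 + Posz (count_mem false w) = Posz n - Posz r2)%R by lia.
  by rewrite /= e1 e2.
have eO : (pt (0, 0)%R w2 n == (Posz r2, Posz n - Posz r2)%R) = (cnt w2 == r2).
  rewrite /pt take_oversize ?s2 //.
  have cf : cnt w2 + count_mem false w2 = n := cw2.
  apply/eqP/eqP => [[h _]|h].
    change (cnt w2 = r2); lia.
  change (cnt w2 = r2) in h.
  have e1 : (0 + Posz (cnt w2) = Posz r2)%R by lia.
  have e2 : (0 + Posz (count_mem false w2) = Posz n - Posz r2)%R by lia.
  by rewrite /= e1 e2.
rewrite eA eO; case c1: (cnt w == r1) => //; case c2: (cnt w2 == r2) => //=.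
move/eqP: c1 => c1; move/eqP: c2 => c2.
have hA : pt (Posz r2 - Posz r1, Posz r1 - Posz r2)%R w n = (Posz r2, Posz n - Posz r2)%R.
  by apply/eqP; rewrite eA c1.
have hO : pt (0, 0)%R w2 n = (Posz r2, Posz n - Posz r2)%R.
  by apply/eqP; rewrite eO c2.
rewrite /meets_exactly -{1}hA -{1}s1 mem_last_path -{1}hO -{1}s2 mem_last_path.
rewrite !mem_head_path !andTb.
rewrite (all_path _ s1 s2); last by apply: intE; rewrite /=; lia.
rewrite (all_path _ s2 s1) //.
rewrite (@forallS_last n (fun i => (pt (Posz r2 - Posz r1, Posz r1 - Posz r2)%R w i ==
    pt (0, 0)%R w2 i) ==> (pt (Posz r2 - Posz r1, Posz r1 - Posz r2)%R w i ==
    (Posz r2, Posz n - Posz r2)%R))).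
rewrite (@forallS_first n (fun i => (pt (0, 0)%R w2 i == pt (0, 0)%R w i) ==> (pt (0, 0)%R w2 i == (0, 0)%R))).
rewrite hA eqxx implybT andbT !pt0 eqxx implybT andTb.
rewrite /Qn; congr (_ && _); apply: eq_forallb => i.
- have lt := ltn_ord i.
  have nC : (pt (Posz r2 - Posz r1, Posz r1 - Posz r2)%R w i ==
       (Posz r2, Posz n - Posz r2)%R) = false.
    apply/negP => /eqP h.
    have := pt_sum (Posz r2 - Posz r1, Posz r1 - Posz r2)%R (i := i) (w := w).
    rewrite h s1 (ltnW lt) => /(_ isT) /intE /= e; lia.
  rewrite nC implybF pt_eq ?s1 ?s2 ?(ltnW lt) //; last by apply: intE; rewrite /=; lia.
  congr negb.
  have t1 := cnt_take_drop i w; have t2 := cnt_take_drop i w2.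
  apply/eqP/eqP => [/intE /= h|/natE h]; first (apply: natE; lia).
  apply: intE; rewrite /=; lia.
- have lt := ltn_ord i.
  have nO : (pt (0, 0)%R w2 i.+1 == (0, 0)%R) = false.
    apply/negP => /eqP h.
    have := pt_sum (0, 0)%R (i := i.+1) (w := w2).
    rewrite h s2 lt => /(_ isT) /intE /= e; lia.
  rewrite nO implybF pt_eq ?s1 ?s2 //.
  congr negb.
  apply/eqP/eqP => [/intE /= h|/natE h]; first (apply: natE; lia).
  apply: intE; rewrite /=; lia.
Qed.


Lemma Ncount_eq n r1 r2 : r2 <= r1 ->
  Ncount ((Posz r2 - Posz r1)%R, (Posz r1 - Posz r2)%R) (0%R, 0%R)
         (Posz r2, (Posz n - Posz r2)%R) =
  #|[set uv : n.-tuple bool * n.-tuple bool |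
      [&& cnt uv.1 == r1, cnt uv.2 == r2 & Qn n uv.1 uv.2]]|.
Proof.
move=> hr.
have p1 : plen ((Posz r2 - Posz r1)%R, (Posz r1 - Posz r2)%R) (Posz r2, (Posz n - Posz r2)%R) = n.
  rewrite /plen /=.
  have -> : (Posz r2 - (Posz r2 - Posz r1) + (Posz n - Posz r2 - (Posz r1 - Posz r2)))%R = Posz n.
    apply: intE; lia.
  by [].
have p2 : plen (0%R, 0%R) (Posz r2, (Posz n - Posz r2)%R) = n.
  rewrite /plen /=.
  have -> : (Posz r2 - 0 + (Posz n - Posz r2 - 0))%R = Posz n by apply: intE; lia.
  by [].
rewrite /Ncount p1 p2; apply: eq_card => [[w w2]]; rewrite !inE /=.
by rewrite key ?size_tuple.
Qed.


Theorem mainTheorem12 (n : nat) (hn : (2 <= n)%N) :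
  Mbar_neq n =
  (2 * \sum_(0 <= r2 < n.-1)
         \sum_(r2.+2 <= r1 < n.+1)
           Ncount ((Posz r2 - Posz r1)%R, (Posz r1 - Posz r2)%R) (0%R, 0%R)
                  (Posz r2, (Posz n - Posz r2)%R))%N.
Proof.
have n0 : 0 < n by lia.
rewrite (step1 n0) (step2 n0) (step3 hn); congr (2 * _).
apply: eq_big_nat => r2 _; apply: eq_big_nat => r1 /andP[h _].
by rewrite Ncount_eq //; lia.
Qed.
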